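(* Let $A=(a(i,j))_{i,j\in I}$ be a generalized Cartan matrix over $I=\{1,\dots,n\}$ and let $W^{\mathrm{spin}}=W^{\mathrm{spin}}(A)$ be the group with presentation $\langle r_1,\dots,r_n\mid r_i^8=1\ (i\in I);\ r_j^{-1}r_i^2r_j=r_i^2r_j^{2n(i,j)}\ (i\ne j);\ \underbrace{r_ir_jr_i\cdots}_{m_{ij}}=\underbrace{r_jr_ir_j\cdots}_{m_{ij}}\ (i\ne j)\rangle$. Then for all $i\ne j\in I$: (a) $[r_i^2,r_j^2]=r_j^{4n(i,j)}$ and $r_i^{4n(j,i)}=r_j^{4n(i,j)}$; (b) if $n(i,j)=n(j,i)=1$ then $r_i^4=r_j^4$, and otherwise $[r_i^2,r_j^2]=1$; (c) if $n(i,j)=0$ and $n(j,i)=1$ then $r_i^4=1$; (d) $r_jr_i^4r_j^{-1}=r_i^4$ if $n(i,j)=0$ and $r_jr_i^4r_j^{-1}=r_i^2r_j^2r_i^2r_j^2$ if $n(i,j)=1$; (e) $[r_j,r_i^4]=1$. In particular, the subgroup $\langle r_i^4\mid i\in I\rangle$ is central in $W^{\mathrm{spin}}$.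
   Context: A generalized Cartan matrix satisfies $a(i,i)=2$, $a(i,j)\in\mathbb Z_{\le0}$ for $i\neq j$, and $a(i,j)=0\iff a(j,i)=0$. For $i\ne j$: $n(i,j)=0$ if $a(i,j)$ is even and $n(i,j)=1$ if $a(i,j)$ is odd; $m_{ij}=2,3,4,6$ if $a(i,j)a(j,i)=0,1,2,3$ respectively, and $m_{ij}=0$ (no braid relation) if $a(i,j)a(j,i)\ge4$. Commutator convention $[x,y]=x^{-1}y^{-1}xy$. *)

(* Defs.v *)
From HB Require Import structures.
From mathcomp Require Import all_boot all_order all_algebra.
Set Implicit Arguments. Unset Strict Implicit. Unset Printing Implicit Defensive.
Import Order.TTheory GRing.Theory Num.Theory.

Definition is_GCM (n : nat) (A : 'M[int]_n) : Prop :=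
  [/\ (forall i, A i i = 2%R),
      (forall i j, i != j -> (A i j <= 0)%R) &
      (forall i j, A i j = 0%R <-> A j i = 0%R)].

Definition nij (n : nat) (A : 'M[int]_n) (i j : 'I_n) : nat :=
  if odd (absz (A i j)) then 1 else 0.

(* m_ij = 2,3,4,6 if a(i,j)a(j,i) = 0,1,2,3, and 0 (no relation) otherwise *)
Definition mij (n : nat) (A : 'M[int]_n) (i j : 'I_n) : nat :=
  match absz (A i j * A j i)%R with
  | 0 => 2 | 1 => 3 | 2 => 4 | 3 => 6 | _ => 0 end.

Fixpoint altprod (G : groupType) (x y : G) (m : nat) : G :=
  match m with 0 => 1%g | m'.+1 => (x * altprod y x m')%g end.

Inductive in_gen (G : groupType) (S : G -> Prop) : G -> Prop :=
  | gen_base x : S x -> in_gen S x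
  | gen_one : in_gen S 1%g
  | gen_mul x y : in_gen S x -> in_gen S y -> in_gen S (x * y)%g
  | gen_inv x : in_gen S x -> in_gen S (x^-1)%g.

(* Main.v *)
Require Import Defs.
From HB Require Import structures.
From mathcomp Require Import all_boot all_order all_algebra.
From mathcomp Require Import zify.
Set Implicit Arguments. Unset Strict Implicit. Unset Printing Implicit Defensive.
Import Order.TTheory GRing.Theory Num.Theory.
Local Open Scope group_scope.

Section Core.
Variable G : groupType.

Lemma conj_pow_self (y : G) k : (y ^+ k) ^ y = y ^+ k.
Proof. by rewrite conjgE -expgSr expgS mulKg. Qed.

Lemma conj_sq (x y : G) n :
  y^-1 * x ^+ 2 * y = x ^+ 2 * y ^+ (2 * n) ->
  (x ^+ 2) ^ (y ^+ 2) = x ^+ 2 * y ^+ (2 * n) * y ^+ (2 * n).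
Proof.
move=> h; have h1 : (x ^+ 2) ^ y = x ^+ 2 * y ^+ (2 * n) by rewrite conjgE mulgA.
by rewrite expg2 conjgM h1 conjMg h1 conj_pow_self.
Qed.

Lemma comm_sq (x y : G) n :
  y^-1 * x ^+ 2 * y = x ^+ 2 * y ^+ (2 * n) ->
  [~ x ^+ 2, y ^+ 2] = y ^+ (4 * n).
Proof.
move=> h; rewrite commgEl (conj_sq h) -mulgA mulKg -expgnDr.
by congr (_ ^+ _); lia.
Qed.

Lemma pow4_inv (y : G) n : (n <= 1)%N -> y ^+ 8 = 1 -> (y ^+ (4 * n))^-1 = y ^+ (4 * n).
Proof.
case: n => [|[|//]] _ h; first by rewrite invg1.
by apply: mulg1_eq; rewrite -expgnDr.
Qed.

Lemma core (x y : G) n m : (n <= 1)%N -> (m <= 1)%N ->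
  x ^+ 8 = 1 -> y ^+ 8 = 1 ->
  y^-1 * x ^+ 2 * y = x ^+ 2 * y ^+ (2 * n) ->
  x^-1 * y ^+ 2 * x = y ^+ 2 * x ^+ (2 * m) ->
  [/\ [~ x ^+ 2, y ^+ 2] = y ^+ (4 * n),
      x ^+ (4 * m) = y ^+ (4 * n),
      (x ^+ 4) ^ y = x ^+ 4 &
      (n = 1%N -> x ^+ 2 * y ^+ 2 * x ^+ 2 * y ^+ 2 = x ^+ 4)].
Proof.
move=> hn hm hx hy h1 h2.
have c1 := comm_sq h1; have c2 := comm_sq h2.
have e2 : x ^+ (4 * m) = y ^+ (4 * n).
  by rewrite -c2 -invgR c1 pow4_inv.
have cj : (x ^+ 2) ^ y = x ^+ 2 * y ^+ (2 * n) by rewrite conjgE mulgA.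
have bb : y ^+ 2 * y ^+ 2 = y ^+ (4 * n) -> commute (x ^+ 2) (y ^+ 2 * y ^+ 2).
  move=> ->; rewrite -e2 (_ : (4 * m = 2 * (2 * m))%N); last lia.
  rewrite expgnA; apply: commuteX; exact: commute_refl.
have key : n = 1%N -> y ^+ 2 * x ^+ 2 * y ^+ 2 = x ^+ 2.
  move=> n1; subst n.
  have cs := conj_sq h1.
  have -> : y ^+ 2 * x ^+ 2 * y ^+ 2 = y ^+ 2 * (y ^+ 2 * (x ^+ 2) ^ (y ^+ 2)).
    by rewrite conjgE mulVKg !mulgA.
  rewrite cs muln1 mulgA -(mulgA (x ^+ 2) (y ^+ 2)) mulgA.
  have e : y ^+ 2 * y ^+ 2 = y ^+ (4 * 1) by rewrite -expgnDr.
  have bb' := bb e; rewrite /commute in bb'.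
  rewrite -bb' -mulgA -!expgnDr.
  by rewrite (_ : (2 + 2 + (2 + 2)) = 8)%N // hy mulg1.
split=> //.
- have -> : x ^+ 4 = x ^+ 2 * x ^+ 2 by rewrite -expgnDr.
  rewrite conjMg cj.
  case: n hn h1 c1 e2 bb key cj => [|[|//]] _ h1' c1' e2' bb' key' cj'.
    by rewrite mulg1.
  by rewrite muln1 -mulgA (mulgA (y ^+ 2)) (key' erefl).
- move=> n1; have -> : x ^+ 2 * y ^+ 2 * x ^+ 2 * y ^+ 2 = x ^+ 2 * (y ^+ 2 * x ^+ 2 * y ^+ 2) by rewrite !mulgA.
  rewrite key //.
  by rewrite -expgnDr.
Qed.
End Core.

Local Close Scope group_scope.
Lemma conj_fix_inv (G : groupType) (x y : G) : (x ^ y = x -> y * x * y^-1 = x)%g.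
Proof. by move=> h; rewrite -{1}h conjgE mulVKg mulgK. Qed.

Lemma conj_fix_comm (G : groupType) (x y : G) : (x ^ y = x -> [~ y, x] = 1)%g.
Proof. by move=> h; apply/eqP; rewrite commg1_sym; apply/conjg_fixP. Qed.

Lemma nij_le1 n (A : 'M[int]_n) i j : (nij A i j <= 1)%N.
Proof. by rewrite /nij; case: ifP. Qed.

Lemma gen_comm (G : groupType) (S : G -> Prop) z :
  (forall s, S s -> commute z s) -> forall y, in_gen S y -> commute z y.
Proof.
move=> hS y; elim=> [s Hs||a b _ Ha _ Hb|a _ Ha].
- exact: hS.
- exact: commute1.
- exact: commuteM.
- exact: commuteV.
Qed.

Theorem mainTheorem17 (n : nat) (A : 'M[int]_n) (hA : is_GCM A)
  (G : groupType) (r : 'I_n -> G)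
  (h8 : forall i, (r i ^+ 8 = 1)%g)
  (hconj : forall i j, i != j ->
     ((r j)^-1 * r i ^+ 2 * r j = r i ^+ 2 * r j ^+ (2 * nij A i j))%g)
  (hbraid : forall i j, i != j ->
     altprod (r i) (r j) (mij A i j) = altprod (r j) (r i) (mij A i j)) :
  (forall i j, i != j ->
     [/\ ([~ r i ^+ 2, r j ^+ 2] = r j ^+ (4 * nij A i j))%g
         /\ (r i ^+ (4 * nij A j i) = r j ^+ (4 * nij A i j))%g,
       (if (nij A i j == 1) && (nij A j i == 1)
        then (r i ^+ 4 = r j ^+ 4)%g
        else ([~ r i ^+ 2, r j ^+ 2] = 1)%g),
       ((nij A i j == 0) && (nij A j i == 1) -> (r i ^+ 4 = 1)%g),
       (if nij A i j == 0
        then (r j * r i ^+ 4 * (r j)^-1 = r i ^+ 4)%g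
        else (r j * r i ^+ 4 * (r j)^-1
              = r i ^+ 2 * r j ^+ 2 * r i ^+ 2 * r j ^+ 2)%g) &
       ([~ r j, r i ^+ 4] = 1)%g])
  /\
  (forall x y, in_gen (fun z => exists i, z = (r i ^+ 4)%g) x ->
     in_gen (fun z => exists i, z = r i) y -> (x * y = y * x)%g).
Proof.
have part1 : forall i j, i != j ->
     [/\ ([~ r i ^+ 2, r j ^+ 2] = r j ^+ (4 * nij A i j))%g
         /\ (r i ^+ (4 * nij A j i) = r j ^+ (4 * nij A i j))%g,
       (if (nij A i j == 1) && (nij A j i == 1)
        then (r i ^+ 4 = r j ^+ 4)%g
        else ([~ r i ^+ 2, r j ^+ 2] = 1)%g),
       ((nij A i j == 0) && (nij A j i == 1) -> (r i ^+ 4 = 1)%g),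
       (if nij A i j == 0
        then (r j * r i ^+ 4 * (r j)^-1 = r i ^+ 4)%g
        else (r j * r i ^+ 4 * (r j)^-1
              = r i ^+ 2 * r j ^+ 2 * r i ^+ 2 * r j ^+ 2)%g) &
       ([~ r j, r i ^+ 4] = 1)%g].
  move=> i j ij; have ji : j != i by rewrite eq_sym.
  have [c1 e2 cf key] := core (nij_le1 A i j) (nij_le1 A j i) (h8 i) (h8 j)
     (hconj i j ij) (hconj j i ji).
  have [c1' _ _ _] := core (nij_le1 A j i) (nij_le1 A i j) (h8 j) (h8 i)
     (hconj j i ji) (hconj i j ij).
  have he := conj_fix_comm cf; have hi := conj_fix_inv cf.
  move: (nij_le1 A i j) (nij_le1 A j i) c1 e2 key c1'.
  case: (nij A i j) => [|[|//]] ; case: (nij A j i) => [|[|//]] _ _ c1 e2 key c1' /=.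
  - by split.
  - split=> //; move: e2; by rewrite muln1.
  - split=> //; first by rewrite -[LHS]invgK invgR c1' invg1.
    by rewrite hi (key erefl).
  - split; [by split | by move: e2; rewrite muln1 | by [] |
      by rewrite hi (key erefl) | by []].
split=> // x y hx hy.
have hgen : forall z, in_gen (fun z => exists i, z = (r i ^+ 4)%g) z ->
    forall j, commute (r j) z.
  move=> z; elim=> [s [i ->]||a b _ Ha _ Hb|a _ Ha] j.
  - have [-> | ij] := eqVneq i j.
      apply: commuteX; exact: commute_refl.
    by apply/commgP/eqP; have [_ _ _ _ ->] := part1 i j ij.
  - exact: commute1.
  - exact: commuteM.
  - exact: commuteV.
have := @gen_comm G (fun z => exists i, z = r i) x.
move=> H; apply: H => //.
by move=> s [j ->]; apply: commute_sym; exact: hgen.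
Qed.
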